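(* Let $N,k$ be positive integers with $k<N/2$ (and $k\ge 6$), and for a real $c$ with $N/c$ a positive integer define $$\gamma(N,k,c)=\sum_{m=0}^{\lfloor k/2\rfloor}\binom{N/c}{m}^2\binom{(1-2/c)N}{k-2m}.$$ Then there is an absolute constant $C$ such that $\gamma(N,k,c)/\binom{N}{k}\le C\sqrt{c/k}$ for every such $c$ with $2\le c\le k/3$.
   Context: $\gamma(N,k,c)/\binom{N}{k}$ equals the probability that a balance with $N/c$ coins on each pan is balanced, when the $N/c+N/c$ placed coins are chosen among $N$ coins of which $k$ uniformly random ones are false (all false coins have equal weight). *)

(* Defs.v *)
From mathcomp Require Import all_boot.
From Stdlib Require Import Reals.

(* gamma N k n, where n = N/c (a positive integer), so that
   (1 - 2/c) N = N - 2n: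
   gamma = \sum_{m=0}^{floor(k/2)} C(n,m)^2 * C(N - 2n, k - 2m). *)
Definition gamma_nat (N k n : nat) : nat :=
  \sum_(0 <= m < k./2.+1) ('C(n, m) ^ 2 * 'C(N - 2 * n, k - 2 * m)).

Definition gamma (N k n : nat) : R := INR (gamma_nat N k n).

(* Main.v *)
Require Import Defs.
From mathcomp Require Import all_boot.
From Stdlib Require Import Reals.
From mathcomp Require Import zify.
From Stdlib Require Import Lra Psatz.
From mathcomp Require Import ssrnat ring.

Lemma sum_eo (f : nat -> nat) K :
  \sum_(0 <= m < K) f (2*m) + \sum_(0 <= m < K) f (2*m+1) = \sum_(0 <= i < 2*K) f i.
Proof.
elim: K => [|K IH]; first by rewrite !big_geq.
have -> : 2 * K.+1 = (2*K).+2 by lia.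
rewrite !big_nat_recr //= -IH addn1; lia.
Qed.

Lemma sum_widen (f : nat -> nat) a b : a <= b ->
  \sum_(0 <= i < a) f i <= \sum_(0 <= i < b) f i.
Proof. move=> h; rewrite [X in _ <= X](big_cat_nat (n:=a)) //=; apply: leq_addr. Qed.

Lemma vand a b p : \sum_(0 <= i < p.+1) 'C(a,i) * 'C(b,p-i) = 'C(a+b,p).
Proof. by rewrite big_mkord Vandermonde. Qed.

Definition cb m := 'C(2*m, m).

Lemma cb_rec m : cb m.+1 * m.+1 = 2*(2*m+1) * cb m.
Proof.
rewrite /cb.
have e1 := mul_bin_diag (2*m).+2 m.
have e2 := mul_bin_diag (2*m).+1 m.
have e3 : 'C((2*m).+1, m) = 'C((2*m).+1, m.+1).
  have h : m.+1 = (2*m).+1 - m by lia.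
  by rewrite [in RHS]h bin_sub //; lia.
simpl in e1, e2.
have -> : 2 * m.+1 = (2*m).+2 by lia.
apply/eqP; rewrite -(eqn_pmul2r (ltn0Sn m)); apply/eqP.
rewrite e3 in e1.
have -> : 'C((2 * m).+2, m.+1) * m.+1 * m.+1 = (m.+1 * 'C((2 * m).+2, m.+1)) * m.+1 by ring.
rewrite -e1.
have -> : (2 * m).+2 * 'C((2 * m).+1, m.+1) * m.+1 = (2*m).+2 * (m.+1 * 'C((2 * m).+1, m.+1)) by ring.
rewrite -e2; ring.
Qed.

Lemma cb_pos m : 0 < cb m.
Proof. rewrite /cb bin_gt0; lia. Qed.

Lemma cb_up m : cb m ^ 2 * (2*m+1) <= 16 ^ m.
Proof.
elim: m => [|m IH]; first by rewrite /cb.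
have E := cb_rec m.
rewrite -(@leq_pmul2r (m.+1 ^ 2)) ?expn_gt0 //.
have -> : cb m.+1 ^ 2 * (2 * m.+1 + 1) * m.+1 ^ 2 = (cb m.+1 * m.+1)^2 * (2*m+3) by ring.
rewrite E.
have H2 : (2 * (2 * m + 1) * cb m) ^ 2 * (2 * m + 3) = cb m ^2 * (2*m+1) * (4*(2*m+1)*(2*m+3)) by ring.
rewrite H2.
apply: (leq_trans (leq_mul IH (leqnn _))).
rewrite expnS; move: (16 ^ m) => t; nia.
Qed.

Lemma cb_low m : 16 ^ m <= cb m ^ 2 * (4*m+1).
Proof.
elim: m => [|m IH]; first by rewrite /cb.
have E := cb_rec m.
rewrite -(@leq_pmul2r ((4*m+1) * m.+1 ^ 2)) ?muln_gt0 ?expn_gt0 //.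
have -> : cb m.+1 ^ 2 * (4 * m.+1 + 1) * ((4 * m + 1) * m.+1 ^ 2) = (cb m.+1 * m.+1)^2 * (4*m+5) * (4*m+1) by ring.
rewrite E.
have H2 : (2 * (2 * m + 1) * cb m) ^ 2 * (4 * m + 5) * (4*m+1) = cb m ^2 * (4*m+1) * (4*(2*m+1)^2*(4*m+5)) by ring.
rewrite H2.
apply: leq_trans (leq_mul IH (leqnn _)).
  rewrite expnS; move: (16 ^ m) => t; nia.
by rewrite addn1.
Qed.

Lemma cbP n m : m <= n ->
  (cb m * cb (n-m)) ^ 2 * (2*m+1) * (2*(n-m)+1) <= 4*(n+1) * cb n ^ 2.
Proof.
move=> h.
have u1 := cb_up m. have u2 := cb_up (n-m). have l := cb_low n.
have e : 16 ^ n = 16 ^ m * 16 ^ (n - m) by rewrite -expnD; congr expn; lia.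
have -> : (cb m * cb (n-m)) ^ 2 * (2*m+1) * (2*(n-m)+1) =
   (cb m ^ 2 * (2*m+1)) * (cb (n-m) ^2 * (2*(n-m)+1)) by ring.
apply: leq_trans (leq_mul u1 u2) _. rewrite -e.
apply: leq_trans l _. move: (cb n ^ 2) => t; nia.
Qed.

Lemma binI n m : m <= n ->
  'C(n,m) * 'C(n,m) * cb n = 'C(2*n, 2*m) * cb m * cb (n-m).
Proof.
move=> h.
have F0 : 0 < (m`! * (n-m)`!) * (m`! * (n-m)`!) * (n`! * n`!).
  by rewrite !muln_gt0 !fact_gt0.
apply/eqP; rewrite -(eqn_pmul2r F0); apply/eqP.
have h1 := bin_fact h.
have h2 : cb n * (n`! * n`!) = (2*n)`!.
  rewrite /cb -(@bin_fact (2*n) n); last lia. by have -> : 2*n-n = n by lia.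
have h3 : cb m * (m`! * m`!) = (2*m)`!.
  rewrite /cb -(@bin_fact (2*m) m); last lia. by have -> : 2*m-m = m by lia.
have h4 : cb (n-m) * ((n-m)`! * (n-m)`!) = (2*(n-m))`!.
  rewrite /cb -(@bin_fact (2*(n-m)) (n-m)); last lia. by have -> : 2*(n-m)-(n-m) = n-m by lia.
have h5 : 'C(2*n, 2*m) * ((2*m)`! * (2*(n-m))`!) = (2*n)`!.
  rewrite -(@bin_fact (2*n) (2*m)); last lia. by have -> : 2*n-2*m = 2*(n-m) by lia.
transitivity (('C(n, m) * (m`! * (n - m)`!)) * ('C(n, m) * (m`! * (n - m)`!)) * (cb n * (n`! * n`!))).
  ring.
rewrite h1 h2 -h5 -h3 -h4. ring.
Qed.

Lemma binA n m : 'C((2*n).+1, (2*m).+1) * (2*m+1) = (2*n+1) * 'C(2*n, 2*m).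
Proof. have := mul_bin_diag (2*n).+1 (2*m). rewrite /= !addn1 => ->. ring. Qed.

Lemma binB n m : m <= n -> 'C((2*n).+1, 2*m) * (2*(n-m)+1) = (2*n+1) * 'C(2*n, 2*m).
Proof.
move=> h. have := mul_bin_down (2*n).+1 (2*m). rewrite /= => e. rewrite !addn1 e.
have -> : (2*n).+1 - 2*m = (2*(n-m)).+1 by lia. ring.
Qed.

From Stdlib Require Import Ring Field Reals Lra Psatz.
From mathcomp Require Import ssrnat.
Open Scope R_scope.

Lemma key_real (x w0 A B bm bnm bn u v nn s : R) :
 0 < bn -> 0 <= w0 -> 0 < u -> 0 < v -> 0 < s -> 0 <= x -> 0 <= bm -> 0 <= bnm -> 0 <= nn ->
 x*x*bn = w0*bm*bnm -> A*u = (2*nn+1)*w0 -> B*v = (2*nn+1)*w0 -> u+v = 2*nn+2 ->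
 (bm*bnm)*(bm*bnm)*u*v <= 4*(nn+1)*(bn*bn) ->
 x*x <= / (s*(2*nn+1)) * (A+B) + s/2 * w0.
Proof.
intros hbn hw hu hv hs hx hbm hbnm hnn HI HA HB Huv HP.
set (g := bm*bnm/bn).
assert (Hx : x*x = w0*g).
{ unfold g. apply (Rmult_eq_reg_r bn); [|lra]. rewrite HI. field. lra. }
set (p := u*v).
assert (hp : 0 < p) by (unfold p; nra).
set (a := (2*nn+2)/(p*s)).
assert (ha : 0 <= a) by (unfold a; apply Rmult_le_pos; [nra|apply Rlt_le, Rinv_0_lt_compat; nra]).
assert (Has : a*s = (2*nn+2)/p) by (unfold a; field; lra).
assert (HR : / (s*(2*nn+1)) * (A+B) + s/2 * w0 = w0 * (a + s/2)).
{ assert (A = (2*nn+1)*w0/u) by (field_simplify_eq; lra).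
  assert (B = (2*nn+1)*w0/v) by (field_simplify_eq; lra).
  subst A B. unfold a, p. rewrite -Huv. field. lra. }
rewrite HR Hx. clearbody a.
apply Rmult_le_compat_l; auto.
assert (hg : 0 <= g) by (unfold g; apply Rmult_le_pos; [nra|apply Rlt_le, Rinv_0_lt_compat; nra]).
assert (Hg2 : g*g*p <= 4*(nn+1)).
{ unfold g, p. replace (bm * bnm / bn * (bm * bnm / bn) * (u * v)) with ((bm*bnm)*(bm*bnm)*u*v / (bn*bn)) by (field; lra).
  apply (Rmult_le_reg_r (bn*bn)); [nra|]. unfold Rdiv. rewrite Rmult_assoc Rinv_l; nra. }
assert (Hh2 : 4*(nn+1) <= (a + s/2)*(a+s/2)*p).
{ assert (a*s*p = 2*nn+2) by (rewrite Has; field; lra).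
  replace ((a + s/2)*(a+s/2)*p) with ((a-s/2)*(a-s/2)*p + 2*(a*s*p)) by field.
  assert (0 <= (a - s/2)*(a-s/2)*p) by (apply Rmult_le_pos; [apply Rle_0_sqr|lra]). lra. }
assert (g*g <= (a+s/2)*(a+s/2)).
{ apply (Rmult_le_reg_r p); [lra|]. lra. }
assert (0 <= a + s/2) by lra.
nra.
Qed.

Lemma INRm a b : INR (a * b)%N = INR a * INR b.
Proof. exact: mult_INR. Qed.
Lemma INRa a b : INR (a + b)%N = INR a + INR b.
Proof. exact: plus_INR. Qed.
Lemma INR2 : INR 2 = 2. Proof. simpl; lra. Qed.
Lemma INR1 : INR 1 = 1. Proof. simpl; lra. Qed.

Lemma sum_even_le (f : nat -> nat) K :
  (\sum_(0 <= m < K.+1) f (2*m) <= \sum_(0 <= i < (2*K).+1) f i)%N.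
Proof.
rewrite big_nat_recr //= big_nat_recr //= -sum_eo.
rewrite -addnA leq_add2l; exact: leq_addl.
Qed.

Lemma sum_odd_le (f : nat -> nat) K :
  (\sum_(0 <= m < K.+1) f (2*m+1) <= \sum_(0 <= i < (2*K).+2) f i)%N.
Proof.
have -> : (2*K).+2 = (2 * K.+1)%N by lia.
rewrite -sum_eo; exact: leq_addl.
Qed.

Lemma term_le n M j m s : 0 < s ->
 INR ('C(n,m) ^ 2 * 'C(M,j))%N <=
   / (s*(2*INR n+1)) * INR ('C((2*n).+1,(2*m).+1)*'C(M,j) + 'C((2*n).+1,2*m)*'C(M,j))%N
   + s/2 * INR ('C(2*n,2*m)*'C(M,j))%N.
Proof.
move=> hs.
have hal : 0 < / (s*(2*INR n+1)).
  apply: Rinv_0_lt_compat; apply: Rmult_lt_0_compat => //; have := pos_INR n; lra.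
case: (leqP m n) => hmn; last first.
  rewrite bin_small // (_ : (0 ^ 2 = 0)%N) // mul0n /=.
  have := pos_INR ('C((2*n).+1,(2*m).+1)*'C(M,j) + 'C((2*n).+1,2*m)*'C(M,j)).
  have := pos_INR ('C(2*n,2*m)*'C(M,j)). nra.
rewrite !INRm INRa !INRm.
have hj := pos_INR 'C(M,j).
have -> : / (s * (2 * INR n + 1)) * (INR 'C((2 * n).+1, (2 * m).+1) * INR 'C(M, j) + INR 'C((2 * n).+1, 2 * m) * INR 'C(M, j)) +
   s / 2 * (INR 'C(2 * n, 2 * m) * INR 'C(M, j)) =
   (/ (s * (2 * INR n + 1)) * (INR 'C((2 * n).+1, (2 * m).+1) + INR 'C((2 * n).+1, 2 * m)) +
   s / 2 * INR 'C(2 * n, 2 * m)) * INR 'C(M, j) by lra.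
apply: Rmult_le_compat_r => //.
apply: (@key_real _ _ _ _ (INR (cb m)) (INR (cb (n-m))) (INR (cb n))
          (INR (2*m+1)) (INR (2*(n-m)+1))).
- apply: lt_0_INR; apply/ltP; exact: cb_pos.
- exact: pos_INR.
- apply: lt_0_INR; apply/ltP; lia.
- apply: lt_0_INR; apply/ltP; lia.
- exact: hs.
- exact: pos_INR.
- exact: pos_INR.
- exact: pos_INR.
- exact: pos_INR.
- rewrite -!INRm; congr INR; exact: binI.
- have e := f_equal INR (binA n m). rewrite !INRm in e. by rewrite e INRa INRm INR2 INR1.
- have e := f_equal INR (binB n m hmn). rewrite !INRm in e. by rewrite e INRa INRm INR2 INR1.
- rewrite -INRa. have -> : (2 * m + 1 + (2 * (n - m) + 1) = 2*n+2)%N by lia.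
  rewrite INRa INRm INR2. done.
- have e := le_INR _ _ (elimT leP (cbP n m hmn)). rewrite !INRm in e.
  have e4 : INR 4 = 4. { rewrite INR_IZR_INZ. reflexivity. }
  rewrite e4 [INR (n+1)]INRa INR1 in e. exact e.
Qed.

Lemma sum_real (t a b w : nat -> nat) (al be : R) K :
  (forall m, INR (t m) <= al * INR (a m + b m)%N + be * INR (w m)) ->
  INR (\sum_(0 <= m < K) t m)%N <=
    al * INR (\sum_(0 <= m < K) a m + \sum_(0 <= m < K) b m)%N + be * INR (\sum_(0 <= m < K) w m)%N.
Proof.
move=> H; elim: K => [|K IH].
  rewrite !big_geq //= ; lra.
rewrite !big_nat_recr //=.
have HK := H K. rewrite INRa in HK.
rewrite !INRa. rewrite !INRa in IH.
lra.
Qed.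

Lemma sumW a M k K : (2*K <= k)%N ->
  (\sum_(0 <= m < K.+1) 'C(a, 2*m) * 'C(M, k - 2*m) <= 'C(a + M, k))%N.
Proof.
move=> h.
apply: leq_trans (sum_even_le (fun i => 'C(a, i) * 'C(M, k - i))%N K) _.
rewrite -vand. apply: sum_widen. lia.
Qed.

Lemma sumA a M k K : (2*K <= k)%N ->
  (\sum_(0 <= m < K.+1) 'C(a, (2*m).+1) * 'C(M, k - 2*m) <= 'C(a + M, k.+1))%N.
Proof.
move=> h.
have -> : (\sum_(0 <= m < K.+1) 'C(a, (2*m).+1) * 'C(M, k - 2*m) =
   \sum_(0 <= m < K.+1) (fun i => 'C(a, i) * 'C(M, k.+1 - i)) (2*m+1))%N.
  apply: eq_bigr => m _ /=. by rewrite addn1 subSS.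
apply: (leq_trans (sum_odd_le (fun i => 'C(a, i) * 'C(M, k.+1 - i))%N K)).
rewrite -vand. apply: sum_widen. lia.
Qed.

Lemma powE a : Nat.pow a 2 = (a ^ 2)%N.
Proof. rewrite -mulnn /= Nat.mul_1_r. done. Qed.

Theorem lemma4 :
  exists C : R, forall (N k : nat) (c : R) (n : nat),
    (6 <= k)%nat -> INR k < INR N / 2 ->
    (1 <= n)%nat -> INR N / c = INR n ->
    2 <= c -> c <= INR k / 3 ->
    gamma N k n / INR 'C(N, k) <= C * sqrt (c / INR k).
Proof.
exists (3/2).
move=> N k c n hk hkN hn hNc hc2 hck.
have hk0 : 0 < INR k by apply: lt_0_INR; apply/ltP; lia.
have hn0 : 0 < INR n by apply: lt_0_INR; apply/ltP; lia.
have Nc : INR N = c * INR n.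
  rewrite -hNc. field. lra.
have h2n : (2 * n <= N)%N.
  apply/leP; apply: INR_le. rewrite INRm INR2. nra.
have h2k : (2 * k < N)%N.
  apply/ltP; apply: INR_lt. rewrite INRm INR2. lra.
set M := (N - 2 * n)%N.
have eM1 : (2 * n + M = N)%N by rewrite /M; lia.
have eM2 : ((2 * n).+1 + M = N.+1)%N by rewrite /M; lia.
set s := sqrt (c / INR k).
have hck0 : 0 < c / INR k by apply: Rdiv_lt_0_compat; lra.
have hs : 0 < s by apply: sqrt_lt_R0.
have hs2 : s * s = c / INR k by apply: sqrt_sqrt; lra.
set al := / (s * (2 * INR n + 1)).
set be := s / 2.
set K := k./2.
have hK : (2 * K <= k)%N.
  have := odd_double_half k. rewrite -/K -mul2n. case: (odd k) => /=; lia.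
have Hsum := sum_real
   (fun m => 'C(n, m) ^ 2 * 'C(N - 2 * n, k - 2 * m))%N
   (fun m => 'C((2*n).+1,(2*m).+1)*'C(M, k - 2*m))%N
   (fun m => 'C((2*n).+1,2*m)*'C(M, k - 2*m))%N
   (fun m => 'C(2*n,2*m)*'C(M, k - 2*m))%N al be K.+1
   (fun m => term_le n M (k - 2*m) m s hs).
have HA := sumA (2*n).+1 M k K hK.
have HB := sumW (2*n).+1 M k K hK.
have HW := sumW (2*n) M k K hK.
rewrite eM2 in HA HB. rewrite eM1 in HW.
have hkN' : (k <= N)%N by lia.
have Ck0 : 0 < INR 'C(N, k).
  apply: lt_0_INR; apply/ltP. by rewrite bin_gt0.
have EX := mul_bin_diag N.+1 k. simpl in EX.
have EY := mul_bin_down N.+1 k. simpl in EY.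
have EX' := f_equal INR EX. have EY' := f_equal INR EY.
rewrite !INRm in EX' EY'.
rewrite minus_INR in EY'; last by apply/leP; lia.
have SI : forall x, INR x.+1 = INR x + 1 by move=> x; exact: S_INR.
rewrite !SI in EX'. rewrite !SI in EY'.
have hNk : INR k + 1 <= INR N + 1 - INR k.
  have : (2 * k < N)%N := h2k. move/ltP/lt_INR. rewrite INRm INR2. lra.
set G := gamma N k n.
set X := INR 'C(N.+1, k.+1). set Y := INR 'C(N.+1, k). set Ck := INR 'C(N, k).
rewrite -/Ck in Ck0.
have hX : 0 <= X := pos_INR _. have hY : 0 <= Y := pos_INR _.
have HA' := le_INR _ _ (elimT leP HA). have HB' := le_INR _ _ (elimT leP HB).
have HW' := le_INR _ _ (elimT leP HW).
rewrite INRa in Hsum.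
have hal : 0 < al.
  apply: Rinv_0_lt_compat; apply: Rmult_lt_0_compat => //; lra.
have Hg : G <= al * (X + Y) + be * Ck.
  rewrite /G /gamma /gamma_nat.
  rewrite (eq_bigr (fun m => ('C(n, m) ^ 2 * 'C(N - 2 * n, k - 2 * m))%N)); last first.
    move=> m _. by rewrite powE.
  apply: (Rle_trans _ _ _ Hsum).
  rewrite -/X -/Y -/Ck in HA' HB' HW'.
  apply: Rplus_le_compat.
    apply: Rmult_le_compat_l; lra.
  apply: Rmult_le_compat_l; rewrite /be; lra.
have HXY : (X + Y) * (INR k + 1) <= 2 * (INR N + 1) * Ck.
  rewrite -/X -/Y -/Ck in EX' EY'.
  have : Y * (INR k + 1) <= Y * (INR N + 1 - INR k) by apply: Rmult_le_compat_l.
  lra.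
have HXY2 : X + Y <= s * s * (2 * INR n + 1) * Ck.
  rewrite hs2.
  apply: (Rmult_le_reg_r (INR k * (INR k + 1))); first nra.
  have -> : c / INR k * (2 * INR n + 1) * Ck * (INR k * (INR k + 1)) =
     (2 * (c * INR n) + c) * (INR k + 1) * Ck.
    field. lra.
  rewrite -Nc.
  have t1 : (X + Y) * (INR k + 1) * INR k <= 2 * (INR N + 1) * Ck * INR k.
    apply: Rmult_le_compat_r; lra.
  have t2 : 2 * (INR N + 1) * INR k <= (2 * INR N + c) * (INR k + 1) by nra.
  have t3 : 2 * (INR N + 1) * INR k * Ck <= (2 * INR N + c) * (INR k + 1) * Ck.
    apply: Rmult_le_compat_r; lra.
  have e1 : (X + Y) * (INR k * (INR k + 1)) = (X + Y) * (INR k + 1) * INR k by ring.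
  have e2 : 2 * (INR N + 1) * Ck * INR k = 2 * (INR N + 1) * INR k * Ck by ring.
  lra.
have Hal : al * (X + Y) <= s * Ck.
  rewrite /al.
  have -> : s * Ck = / (s * (2 * INR n + 1)) * (s * s * (2 * INR n + 1) * Ck).
    field. lra.
  apply: Rmult_le_compat_l; [exact: Rlt_le hal | lra].
apply: (Rmult_le_reg_r Ck) => //.
rewrite /Rdiv Rmult_assoc Rinv_l; last lra.
rewrite /be in Hg. lra.
Qed.
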